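(* Let $x,u,v\in\mathbb{R}^N$ with $|u|=|v|=r>0$. Assume that $B_r(x+u)\cap B_r(-x-v)=\emptyset$ and $B_r(x-u)\cap B_r(-x+v)=\emptyset$. Then $|u-v|\le 2|x|$.
   Context: $B_r(y)$ denotes the open Euclidean ball of radius $r$ centered at $y$. *)

(* Defs.v *)
(* R^N is 'rV[R]_N over an abstract real closed field R
   (the reals are an instance). *)
From mathcomp Require Import all_boot all_order all_algebra.
Set Implicit Arguments. Unset Strict Implicit. Unset Printing Implicit Defensive.
Import Order.TTheory GRing.Theory Num.Theory.
Local Open Scope ring_scope.

Definition enorm (R : rcfType) (N : nat) (v : 'rV[R]_N) : R :=
  Num.sqrt (\sum_(i < N) v 0 i ^+ 2).

Definition oball (R : rcfType) (N : nat) (y : 'rV[R]_N) (r : R) : pred 'rV[R]_N :=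
  fun z => enorm (z - y) < r.

(* Main.v *)
Require Import Defs.
From mathcomp Require Import all_boot all_order all_algebra.
From mathcomp Require Import ring lra.
Import Order.TTheory GRing.Theory Num.Theory.
Local Open Scope ring_scope.

Definition S {R : rcfType} {N : nat} (v : 'rV[R]_N) : R := \sum_(i < N) v 0 i ^+ 2.

Lemma enormE {R : rcfType} {N : nat} (v : 'rV[R]_N) : enorm v = Num.sqrt (S v).
Proof. by []. Qed.

Lemma S_ge0 {R : rcfType} {N : nat} (v : 'rV[R]_N) : 0 <= S v.
Proof. by apply: sumr_ge0 => i _; rewrite sqr_ge0. Qed.

Lemma sqrt_lt {R : rcfType} (a r : R) : 0 < r -> (Num.sqrt a < r) = (a < r ^+ 2).
Proof.
move=> r0; rewrite -{1}(ger0_norm (ltW r0)) -sqrtr_sqr ltr_sqrt //.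
by rewrite exprn_gt0.
Qed.

Lemma disj {R : rcfType} {N : nat} {a b : 'rV[R]_N} {r : R} : 0 < r ->
  (forall z, ~ (oball a r z /\ oball b r z)) -> 4 * r ^+ 2 <= S (a - b).
Proof.
move=> r0 H; rewrite leNgt; apply/negP => Hlt.
apply: (H (2^-1 *: (a + b))).
have E1 : S (2^-1 *: (a + b) - a) = S (a - b) / 4.
  rewrite /S mulr_suml; by apply: eq_bigr => i _; rewrite !mxE; field.
have E2 : S (2^-1 *: (a + b) - b) = S (a - b) / 4.
  rewrite /S mulr_suml; by apply: eq_bigr => i _; rewrite !mxE; field.
by rewrite /oball !enormE E1 E2 !sqrt_lt //; split; lra.
Qed.

Theorem lemma2p1 (R : rcfType) (N : nat) (x u v : 'rV[R]_N) (r : R) :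
  0 < r -> enorm u = r -> enorm v = r ->
  (forall z, ~ (oball (x + u) r z /\ oball (- x - v) r z)) ->
  (forall z, ~ (oball (x - u) r z /\ oball (- x + v) r z)) ->
  enorm (u - v) <= 2 * enorm x.
Proof.
move=> r0 hu hv H1 H2.
have D1 := disj r0 H1; have D2 := disj r0 H2.
have Su : S u = r ^+ 2 by rewrite -hu enormE sqr_sqrtr // S_ge0.
have Sv : S v = r ^+ 2 by rewrite -hv enormE sqr_sqrtr // S_ge0.
have Id : 2 * S (u - v) + S (x + u - (- x - v)) + S (x - u - (- x + v))
          = 8 * S x + 4 * S u + 4 * S v.
  rewrite /S !mulr_sumr -!big_split /=; apply: eq_bigr => i _; rewrite !mxE; ring.
have Hd : S (u - v) <= 4 * S x by lra.
rewrite !enormE.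
have -> : 2 * Num.sqrt (S x) = Num.sqrt (4 * S x).
  rewrite sqrtrM // (_ : 4 = 2 ^+ 2 :> R); last by rewrite expr2; lra.
  by rewrite sqrtr_sqr ger0_norm.
by rewrite ler_sqrt // mulr_ge0 // S_ge0.
Qed.
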